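(* Let $O_1,\ldots,O_M$ be observables on $\mathbb{C}^d$ with $0\preceq O_i\preceq \mathbb{I}_d$. Under $\gamma$-adversarial corruption, the algorithm that splits the copies evenly into $M$ groups, measures each copy in group $i$ with the two-outcome POVM $\{O_i,\mathbb{I}_d-O_i\}$, and outputs for each $i$ the empirical mean of the indicator of the outcome $O_i$ in group $i$, achieves an error of $\varepsilon=O(\min\{\gamma M,1\})$ using $n=M\log(M/\delta)/\varepsilon^2$ copies. This is optimal in the sense that (in the worst case over the observables) every algorithm that directly measures each copy with one of the measurements $\{O_i,\mathbb{I}_d-O_i\}$ must incur an error of $\varepsilon=\Omega(\gamma M)$.
   Context: Let $\rho\in\mathbb{C}^{d\times d}$ be an unknown quantum state of which $n$ copies are available, each measured separately. The goal is to output $E_1,\ldots,E_M$ with $|E_i-\operatorname{Tr}[O_i\rho]|\le\varepsilon$ for all $i$ with probability at least $1-\delta$. $\gamma$-adversarial corruption model: after all $n$ outcomes are obtained, an adversary with perfect knowledge of the measurements arbitrarily changes a $\gamma$-fraction of the outcomes, and the algorithm only sees the corrupted outcomes. *)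

(* Defs.v *)
From mathcomp Require Import all_boot all_order all_algebra.
From mathcomp Require Import all_classical all_reals all_analysis.
From mathcomp Require Import complex.

Set Implicit Arguments.
Unset Strict Implicit.
Unset Printing Implicit Defensive.

Import Order.TTheory GRing.Theory Num.Theory.
Local Open Scope ring_scope.

Section Quantum.
Variable R : realType.

Definition adjmx (d : nat) (A : 'M[R[i]]_d) : 'M[R[i]]_d := map_mx Num.conj A^T.

Definition hermitian (d : nat) (A : 'M[R[i]]_d) : Prop := adjmx A = A.

Definition psd (d : nat) (A : 'M[R[i]]_d) : Prop :=
  hermitian A /\
  forall v : 'cV[R[i]]_d, 0 <= ((map_mx Num.conj v^T) *m A *m v) 0 0.

Definition loewner_le (d : nat) (A B : 'M[R[i]]_d) : Prop := psd (B - A).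

Definition density (d : nat) (rho : 'M[R[i]]_d) : Prop :=
  psd rho /\ \tr rho = 1.

(* Born rule: probability of outcome O of the POVM {O, I - O} on state rho,
   i.e. Tr[O rho] (a real number for PSD O, rho; we take its real part). *)
Definition born (d : nat) (O rho : 'M[R[i]]_d) : R := complex.Re (\tr (O *m rho)).

End Quantum.

Section Experiment.
Variable R : realType.
(* Copies are indexed by a finite type I (n = #|I| copies); copy j is measured
   with the two-outcome POVM {O_(a j), I - O_(a j)}; outcome true = "O_(a j)". *)
Variables (I : finType) (M : nat) (a : I -> 'I_M).

Definition outcomes := {ffun I -> bool}.

Definition outcome_prob (p : 'I_M -> R) (x : outcomes) : R :=
  \prod_(j : I) (if x j then p (a j) else 1 - p (a j)).

Definition hamming (x y : outcomes) : nat := #|[set j | x j != y j]|.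

(* gamma-adversary: after seeing all outcomes, changes at most a gamma-fraction
   of them (it knows the measurements and the state, which are fixed before). *)
Definition gamma_adversary (gamma : R) (adv : outcomes -> outcomes) : Prop :=
  forall x, ((hamming (adv x) x)%:R <= gamma * #|I|%:R)%R.

Definition success_prob (p : 'I_M -> R) (adv : outcomes -> outcomes)
  (est : outcomes -> 'I_M -> R) (eps : R) : R :=
  \sum_(x : outcomes | [forall i, `|est (adv x) i - p i| <= eps])
     outcome_prob p x.

End Experiment.

(* The algorithm of the theorem: n = M*m copies, group i = copies (i, k), k < m;
   the estimate for O_i is the empirical frequency of outcome O_i in group i. *)
Definition empirical_mean (R : realType) (M m : nat)
  (y : {ffun 'I_M * 'I_m -> bool}) (i : 'I_M) : R :=
  (#|[set k : 'I_m | y (i, k)]|)%:R / m%:R.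

(* Main.v *)
Require Import Defs.
From mathcomp Require Import all_boot all_order all_algebra.
From mathcomp Require Import all_classical all_reals all_analysis.
From mathcomp Require Import complex.
From mathcomp Require Import ring lra.

Import Order.TTheory GRing.Theory Num.Theory.
Local Open Scope ring_scope.
Section Mx.
Variable R : realType.
Local Notation C := (R[i]).

Lemma psd_form d (A : 'M[C]_d) (u : 'rV[C]_d) : psd A ->
  0 <= (u *m A *m (map_mx Num.conj u^T)) 0 0.
Proof.
move=> [_ hA]; have := hA (map_mx Num.conj u^T).
suff -> : map_mx Num.conj (map_mx Num.conj u^T)^T = u by [].
by apply/matrixP=> i j; rewrite !mxE conjCK.
Qed.

Lemma tr_psd d (A B : 'M[C]_d) : psd A -> psd B -> 0 <= \tr (A *m B).
Proof.
move=> pA pB.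
have Bn : B \is @spectral.normalmx _ d.
  apply/normalmxP; have [hB _] := pB.
  by move: hB; rewrite /Defs.hermitian /Defs.adjmx => ->.
have E := elimT (@orthomx_spectralP _ _ B) Bn.
have := spectral_unitarymx B.
move: E; move: (spectralmx B) (spectral_diag B) => P D E Pu.
have Pinv : invmx P = (P ^t* )%sesqui by rewrite invmx_unitary.
have PP : P *m (P ^t* )%sesqui = 1%:M by apply/unitarymxP.
have hD : P *m B *m (P ^t* )%sesqui = diag_mx D.
  by rewrite E Pinv !mulmxA PP mul1mx -!mulmxA PP mulmx1.
have -> : \tr (A *m B) = \tr (P *m A *m (P ^t* )%sesqui *m diag_mx D).
  by rewrite E Pinv (mulmxA A) mxtrace_mulC !mulmxA.
rewrite mul_mx_diag /mxtrace.
apply: sumr_ge0 => k _; rewrite mxE.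
apply: mulr_ge0.
  have := @psd_form _ _ (matrix.row k P) pA.
  suff -> : (P *m A *m (P ^t* )%sesqui) k k = (row k P *m A *m map_mx Num.conj (matrix.row k P)^T) 0 0 by [].
  rewrite -!row_mul !mxE; apply: eq_bigr => j _; rewrite !mxE //.
have := @psd_form _ _ (matrix.row k P) pB.
have -> : D 0 k = (diag_mx D) k k by rewrite mxE eqxx mulr1n.
rewrite -hD.
suff -> : (P *m B *m (P ^t* )%sesqui) k k = (row k P *m B *m map_mx Num.conj (matrix.row k P)^T) 0 0 by [].
rewrite -!row_mul !mxE; apply: eq_bigr => j _; rewrite !mxE //.
Qed.
End Mx.
Section Born.
Variable R : realType.
Lemma Re_ge0 (z : R[i]) : 0 <= z -> 0 <= complex.Re z.
Proof. by rewrite lecE => /andP[]. Qed.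

Lemma born01 d (O rho : 'M[R[i]]_d) : loewner_le 0 O -> loewner_le O 1%:M ->
  density rho -> 0 <= born O rho <= 1.
Proof.
rewrite /loewner_le subr0 => h0 h1 [hr tr1].
have a := @tr_psd _ _ _ _ h0 hr; have b := @tr_psd _ _ _ _ h1 hr.
rewrite /born; apply/andP; split; first exact: Re_ge0.
move: b; rewrite mulmxBl mul1mx raddfB /= tr1.
case: (\tr (O *m rho)) => x y; rewrite lecE /= => /andP[_].
by rewrite subr_ge0.
Qed.
End Born.
Section Prob.
Variable R : realType.
Variables (I : finType) (M : nat) (a : I -> 'I_M).
Variable p : 'I_M -> R.

Lemma sum_prod_ffun (F : I -> bool -> R) :
  \sum_(x : {ffun I -> bool}) \prod_j F j (x j) = \prod_j (F j true + F j false).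
Proof.
rewrite -(bigA_distr_bigA (fun j b => F j b)); apply: eq_bigr => j _.
by rewrite big_bool.
Qed.

Lemma mgf (G : I -> bool -> R) :
  \sum_(x : {ffun I -> bool}) outcome_prob a p x * \prod_j G j (x j) =
  \prod_j (p (a j) * G j true + (1 - p (a j)) * G j false).
Proof.
rewrite -(sum_prod_ffun (fun j b => (if b then p (a j) else 1 - p (a j)) * G j b)).
by apply: eq_bigr => x _; rewrite /outcome_prob -big_split.
Qed.

Hypothesis p01 : forall i, 0 <= p i <= 1.

Lemma prob_ge0 x : 0 <= outcome_prob a p x.
Proof.
apply: prodr_ge0 => j _; have /andP[h0 h1] := p01 (a j).
by case: (x j) => //; rewrite subr_ge0.
Qed.

Lemma prob_sum1 : \sum_(x : {ffun I -> bool}) outcome_prob a p x = 1.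
Proof.
transitivity (\sum_(x : {ffun I -> bool}) outcome_prob a p x * \prod_(j : I) (fun _ _ => 1 : R) j (x j)).
  by apply: eq_bigr => x _; rewrite big1 ?mulr1.
rewrite (mgf (fun _ _ => 1)); apply: big1 => j _; by rewrite !mulr1 addrC subrK.
Qed.

Definition count1 (x : {ffun I -> bool}) : nat := #|[set j | x j]|.

Lemma count1E x : (count1 x)%:R = \sum_j ((x j)%:R : R).
Proof.
rewrite /count1 -sum1_card natr_sum big_mkcond /=; apply: eq_bigr => j _.
by rewrite inE; case: (x j).
Qed.

Lemma mean_count :
  \sum_(x : {ffun I -> bool}) outcome_prob a p x * (count1 x)%:R = \sum_j p (a j).
Proof.
under eq_bigr do rewrite count1E mulr_sumr.
rewrite exchange_big /=; apply: eq_bigr => j0 _.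
have := mgf (fun j b => if j == j0 then (b%:R : R) else 1).
have -> : \prod_j (p (a j) * (if j == j0 then (true%:R : R) else 1) +
     (1 - p (a j)) * (if j == j0 then false%:R else 1)) = p (a j0).
  rewrite (bigD1 j0) //= eqxx big1 ?mulr1 ?mulr0 ?addr0 //.
  by move=> j /negbTE ->; rewrite !mulr1 addrC subrK.
move=> <-; apply: eq_bigr => x _; congr (_ * _).
by rewrite (bigD1 j0) //= eqxx big1 ?mulr1 // => j /negbTE ->.
Qed.
End Prob.
Arguments count1 {I} x.
Section Diag.
Variable R : realType.
Local Notation C := (R[i]).

Lemma diag_psd d (w : 'rV[C]_d) : (forall k, 0 <= w 0 k) -> psd (diag_mx w).
Proof.
move=> hw; split.
  apply/matrixP => i j; rewrite !mxE rmorphMn /= geC0_conj //.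
  by case: eqVneq => [->|h]; rewrite ?eqxx // eq_sym (negbTE h).
move=> v; rewrite !mxE; apply: sumr_ge0 => k _.
rewrite !mxE (bigD1 k) //= big1 ?addr0; last first.
  by move=> j hj; rewrite !mxE (negbTE hj) mulr0n mulr0.
rewrite !mxE eqxx mulr1n mulrAC mulrC; apply: mulr_ge0 => //.
by rewrite mulrC; apply: mul_conjC_ge0.
Qed.
End Diag.
Section States.
Variable R : realType.
Local Notation C := (R[i]).
Variable M : nat.
Definition wd (i : 'I_M) : 'I_M.+1 := widen_ord (leqnSn M) i.
Lemma wd_eq i j : (wd i == wd j) = (i == j).
Proof. by rewrite -val_eqE -[RHS]val_eqE. Qed.
Lemma wd_max i : (wd i == ord_max) = false.
Proof. by apply/negbTE; rewrite -val_eqE /= neq_ltn ltn_ord. Qed.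

Definition Oobs (i : 'I_M) : 'M[C]_(M.+1) := diag_mx (\row_k ((k == wd i)%:R)).
Definition wvec (i0 : 'I_M) (dl : R) : 'rV[C]_(M.+1) :=
  \row_k (if k == ord_max then real_complex R (1 - dl)
          else if k == wd i0 then real_complex R dl else 0).
Definition rhoS i0 dl := diag_mx (wvec i0 dl).

Lemma Oobs_ok i : loewner_le 0 (Oobs i) /\ loewner_le (Oobs i) 1%:M.
Proof.
split; rewrite /loewner_le.
  by rewrite subr0; apply: diag_psd => k; rewrite mxE ler0n.
have -> : 1%:M - Oobs i = diag_mx (\row_k (1 - (k == wd i)%:R)).
  apply/matrixP => k l; rewrite !mxE.
  by case: (k == l); rewrite ?mulr1n ?mulr0n ?subr0.
apply: diag_psd => k; rewrite mxE; case: (k == wd i); by rewrite ?subrr ?subr0.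
Qed.

Lemma rhoS_density i0 dl : 0 <= dl <= 1 -> density (rhoS i0 dl).
Proof.
move=> /andP[h0 h1]; split.
  apply: diag_psd => k; rewrite mxE.
  case: (k == ord_max); first by rewrite ler0c subr_ge0.
  by case: (k == wd i0); rewrite ?ler0c.
rewrite /rhoS mxtrace_diag (bigD1 ord_max) //= (bigD1 (wd i0)) /=; last first.
  by rewrite wd_max.
rewrite big1 ?addr0; last first.
  move=> k /andP[k1 k2]; rewrite mxE; case: eqP => [e|_]; first by rewrite e eqxx in k1.
  by case: eqP => [e'|_] //; rewrite e' eqxx in k2.
rewrite !mxE eqxx wd_max eqxx -rmorphD /= subrK.
by [].
Qed.

Lemma born_obs i i0 dl : born (Oobs i) (rhoS i0 dl) = if i == i0 then dl else 0.
Proof.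
rewrite /born /Oobs /rhoS mul_mx_diag /mxtrace (bigD1 (wd i)) //= big1 ?addr0.
  rewrite !mxE eqxx mulr1n mul1r wd_max wd_eq.
  by case: (i == i0).
by move=> k /negbTE hk; rewrite !mxE hk mul0rn mul0r.
Qed.
End States.
Section P2.
Variable R : realType.

Lemma pigeon M (M0 : (0 < M)%N) n (a : 'I_n -> 'I_M) :
  exists i0, (M * #|[set j | a j == i0]| <= n)%N.
Proof.
pose i1 : 'I_M := Ordinal M0.
pose k i := #|[set j | a j == i]|.
have [i0 _ hmin] := arg_minnP k (isT : predT i1).
exists i0.
have E : (\sum_(i < M) k i)%N = n.
  rewrite /k; under eq_bigr do rewrite -sum1_card.
  under eq_bigr do rewrite big_mkcond /=.
  rewrite exchange_big /= -[RHS]card_ord -sum1_card; apply: eq_bigr => j _.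
  rewrite (bigD1 (a j)) //= inE eqxx big1 // => i hi.
  by rewrite inE eq_sym (negbTE hi).
apply: (leq_trans _ (eq_leq E)).
rewrite -[X in (X * _)%N]card_ord -sum_nat_const; apply: leq_sum => i _.
exact: hmin.
Qed.

Lemma prob0 (I : finType) M (a : I -> 'I_M) (x : {ffun I -> bool}) :
  x != [ffun _ => false] -> outcome_prob a (fun _ => 0 : R) x = 0.
Proof.
move=> hx.
have [j hj] : exists j, x j.
  apply/existsP; apply: contraR hx => /existsPn h.
  by apply/eqP/ffunP => j; rewrite ffunE; apply/negbTE.
by rewrite /outcome_prob (bigD1 j) //= hj mul0r.
Qed.

Lemma hamming0 (I : finType) (x : {ffun I -> bool}) : hamming x x = 0%N.
Proof. by apply: eq_card0 => j; rewrite inE eqxx. Qed.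

Lemma hamming_x0 (I : finType) (x : {ffun I -> bool}) :
  hamming [ffun _ => false] x = count1 x.
Proof. by apply: eq_card => j; rewrite !inE ffunE; case: (x j). Qed.
End P2.

Section P2main.
Variable R : realType.

Lemma part2 : exists c : R, 0 < c /\
    forall M : nat, (0 < M)%N ->
    exists (d : nat) (O : 'I_M -> 'M[R[i]]_d),
      (forall i, loewner_le 0 (O i) /\ loewner_le (O i) 1%:M) /\
      forall (n : nat) (a : 'I_n -> 'I_M)
             (est : {ffun 'I_n -> bool} -> 'I_M -> R) (gamma eps : R),
        0 <= gamma -> gamma * M%:R <= 1 ->
        (forall rho : 'M[R[i]]_d, density rho ->
           forall adv : {ffun 'I_n -> bool} -> {ffun 'I_n -> bool},
             gamma_adversary gamma adv ->
             2 / 3 <= success_prob a (fun i => born (O i) rho) adv est eps) ->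
        c * (gamma * M%:R) <= eps.
Proof.
exists (1/8); split; first by rewrite divr_gt0 ?ltr0n.
move=> M M0; exists M.+1, (@Oobs R M); split; first exact: Oobs_ok.
move=> n a est gamma eps g0 gM H.
have [i0 hi0] := @pigeon M M0 n a.
set k := #|[set j | a j == i0]| in hi0.
have Mr : (1 : R) <= M%:R by rewrite ler1n.
have g1 : gamma <= 1.
  apply: le_trans gM; rewrite -[X in X <= _]mulr1; exact: ler_wpM2l.
set N : R := (n.+1)%:R.
have N0 : 0 < N by rewrite ltr0n.
have nN : n%:R + 1 = N by rewrite /N -natr1.
set T := Num.max 1 (gamma * n%:R).
have T1 : 1 <= T by rewrite le_max lexx.
have TgN : gamma * n%:R <= T by rewrite le_max lexx orbT.
have T0 : 0 < T by apply: lt_le_trans T1.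
set dl := Num.min 1 (M%:R * T / (2 * N)).
have X0 : 0 <= M%:R * T / (2 * N).
  by apply: divr_ge0; [apply: mulr_ge0; [apply: ler0n| exact: ltW] | rewrite mulr_ge0 // ltW].
have dl0 : 0 <= dl by rewrite le_min ler01 X0.
have dl1 : dl <= 1 by rewrite ge_min lexx.
have dlX : dl <= M%:R * T / (2 * N) by rewrite ge_min lexx orbT.
have dlb : gamma * M%:R / 4 <= dl.
  rewrite le_min; apply/andP; split; first lra.
  have h2 : gamma * N <= 2 * T.
    rewrite -nN mulrDr mulr1; lra.
  rewrite -subr_ge0.
  have -> : M%:R * T / (2 * N) - gamma * M%:R / 4 = M%:R / (4 * N) * (2 * T - gamma * N).
    field; rewrite gt_eqF //.
  apply: mulr_ge0; last by rewrite subr_ge0.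
  by apply: divr_ge0; [apply: ler0n | rewrite mulr_ge0 // ltW].
set x0 : {ffun 'I_n -> bool} := [ffun _ => false].
have est0 : forall i, `|est x0 i - 0| <= eps.
  have d00 : (0:R) <= (0:R) <= (1:R) by rewrite lexx ler01.
  have advid : gamma_adversary gamma (@id {ffun 'I_n -> bool}).
    move=> x; rewrite hamming0; apply: mulr_ge0 => //; exact: ler0n.
  have := H (rhoS R M i0 0) (@rhoS_density R M i0 0 d00) id advid.
  have -> : (fun i => born (Oobs R M i) (rhoS R M i0 0)) = (fun _ => 0).
    by apply: funext => i; rewrite born_obs; case: ifP.
  move=> H0; apply/forallP; case E: [forall i, `|est x0 i - 0| <= eps] => //.
  have : success_prob a (fun _ => 0 : R) id est eps = 0.
    apply: big1 => x hx; apply: prob0; apply: contraTneq hx => ->.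
    by rewrite E.
  move=> E0; rewrite E0 in H0; have h : (0:R) < 2/3 by rewrite divr_gt0 ?ltr0n.
  by move: (le_lt_trans H0 h); rewrite ltxx.
pose adv' (x : {ffun 'I_n -> bool}) := if (count1 x)%:R <= gamma * n%:R then x0 else x.
have advok : gamma_adversary gamma adv'.
  move=> x; rewrite /adv' card_ord; case: ifP => h; first by rewrite hamming_x0.
  by rewrite hamming0 mulr_ge0 // ler0n.
have ddl : (0:R) <= dl <= 1 by rewrite dl0 dl1.
have H1 := H (rhoS R M i0 dl) (@rhoS_density R M i0 dl ddl) adv' advok.
have E1 : (fun i => born (Oobs R M i) (rhoS R M i0 dl)) = (fun i => if i == i0 then dl else 0).
  by apply: funext => i; rewrite born_obs.
rewrite E1 in H1.
set p' := (fun i : 'I_M => if i == i0 then dl else 0) in H1.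
have p01 : forall i, 0 <= p' i <= 1.
  by move=> i; rewrite /p'; case: ifP => _; rewrite ?ddl ?lexx ?ler01.
have hdl : dl <= 2 * eps.
  rewrite leNgt; apply/negP => hlt.
  have S1 : success_prob a p' adv' est eps <=
      \sum_x outcome_prob a p' x * ((count1 x)%:R / T).
    rewrite /success_prob [X in _ <= X](bigID (fun x => [forall i, `|est (adv' x) i - p' i| <= eps])) /=.
    apply: ler_wpDr.
      apply: sumr_ge0 => x _; apply: mulr_ge0; first exact: prob_ge0.
      by apply: divr_ge0; [apply: ler0n | exact: ltW].
    apply: ler_sum => x hx; rewrite -[X in X <= _]mulr1; apply: ler_wpM2l; first exact: prob_ge0.
    rewrite ler_pdivlMr // mul1r.
    move: hx; rewrite /adv'; case: ifP => hc hx.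
      have := (forallP hx) i0; have := est0 i0; rewrite /p' eqxx subr0 !ler_norml => h1 h2.
      exfalso; move: h1 h2 => /andP[h1 h1'] /andP[h2 h2']; lra.
    move/negbT: hc; rewrite -ltNge => hc.
    rewrite ge_max; apply/andP; split; last exact: ltW.
    rewrite ler1n lt0n; apply: contraTneq hc => ->.
    by rewrite -leNgt mulr_ge0 // ler0n.
  have S2 : \sum_x outcome_prob a p' x * ((count1 x)%:R / T) = k%:R * dl / T.
    under eq_bigr do rewrite mulrA.
    rewrite -mulr_suml mean_count; congr (_ / _).
    rewrite /p' -big_mkcond /= sumr_const mulr_natl /k cardsE.
    by [].
  have S3 : k%:R * dl / T <= 1/2.
    rewrite ler_pdivrMr //.
    have kM : k%:R * M%:R <= n%:R :> R by rewrite -natrM ler_nat mulnC.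
    have k0 : 0 <= k%:R :> R by apply: ler0n.
    have e1 : k%:R * dl <= k%:R * (M%:R * T / (2 * N)) by apply: ler_wpM2l.
    apply: le_trans e1 _.
    have -> : k%:R * (M%:R * T / (2 * N)) = (k%:R * M%:R) * (T / (2 * N)).
      by rewrite !mulrA.
    have e2 : k%:R * M%:R * (T / (2 * N)) <= n%:R * (T / (2 * N)).
      apply: ler_wpM2r => //; apply: divr_ge0; [exact: ltW | rewrite mulr_ge0 // ltW //].
    apply: le_trans e2 _.
    have -> : n%:R * (T / (2 * N)) = 1 / 2 * T - T / (2 * N).
      by rewrite -nN; field; rewrite nN gt_eqF.
    rewrite lerBlDr lerDl; apply: divr_ge0; [exact: ltW | rewrite mulr_ge0 // ltW //].
  rewrite S2 in S1; have := le_trans H1 (le_trans S1 S3); lra.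
lra.
Qed.
End P2main.
Section ExpBound.
Variable R : realType.
Lemma expR_quad (u : R) : u <= 1/2 -> expR u <= 1 + u + 2 * u ^+ 2.
Proof.
move=> hu.
have h1 : 1 - u <= expR (- u) by have := expR_ge1Dx (- u); rewrite -[1 - u]/(1 + - u).
have e0 := expR_gt0 u.
have h2 : expR u * (1 - u) <= 1.
  by have := ler_wpM2l (ltW e0) h1; rewrite -expRD subrr expR0.
have h3 : 1 <= (1 + u + 2 * u ^+ 2) * (1 - u).
  have -> : (1 + u + 2 * u ^+ 2) * (1 - u) = 1 + u ^+ 2 * (1 - 2 * u) by ring.
  rewrite lerDl; apply: mulr_ge0; [by rewrite sqr_ge0 | lra].
have pu : 0 < 1 - u by lra.
by rewrite -(ler_pM2r pu); apply: le_trans h2 h3.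
Qed.
End ExpBound.

Section P1.
Variable R : realType.
Variables (M m : nat).

Definition Sg (x : {ffun 'I_M * 'I_m -> bool}) (i : 'I_M) : R :=
  \sum_(k < m) ((x (i, k))%:R : R).

Lemma emp_S x i : empirical_mean R x i = Sg x i / m%:R.
Proof.
rewrite /empirical_mean /Sg; congr (_ / _).
rewrite -sum1_card natr_sum big_mkcond /=; apply: eq_bigr => k _.
by rewrite inE; case: (x (i, k)).
Qed.

Lemma S_diff x y i : `|Sg y i - Sg x i| <= (hamming y x)%:R.
Proof.
rewrite /Sg -sumrB; apply: le_trans (ler_norm_sum _ _ _) _.
have -> : (hamming y x)%:R = \sum_(j : 'I_M * 'I_m) (((y j) != (x j))%:R : R).
  rewrite /hamming -sum1_card natr_sum big_mkcond /=; apply: eq_bigr => j _.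
  by rewrite inE; case: (_ != _).
rewrite (_ : \sum_(j : 'I_M * 'I_m) _ = \sum_(i' < M) \sum_(k < m) (((y (i', k)) != (x (i', k)))%:R : R)); last first.
  by rewrite pair_bigA; apply: eq_bigr => -[].
rewrite (bigD1 i) //= -[X in X <= _]addr0.
apply: lerD.
  apply: ler_sum => k _; by case: (y (i, k)); case: (x (i, k)); rewrite ?subrr ?normr0 ?subr0 ?normr1 ?sub0r ?normrN ?normr1.
by apply: sumr_ge0 => i' _; apply: sumr_ge0 => k _; apply: ler0n.
Qed.

Lemma prod_pair (F : 'I_M * 'I_m -> R) i (B : 'I_m -> R) :
  (forall j, F j = if j.1 == i then B j.2 else 1) -> \prod_j F j = \prod_k B k.
Proof.
move=> hF.
rewrite (_ : \prod_(j : 'I_M * 'I_m) F j = \prod_(i' < M) \prod_(k < m) F (i', k)); last first.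
  by rewrite pair_bigA; apply: eq_bigr => -[].
rewrite (bigD1 i) //= [X in _ * X]big1 ?mulr1.
  by apply: eq_bigr => k _; rewrite hF /= eqxx.
by move=> i' hi'; apply: big1 => k _; rewrite hF /= (negbTE hi').
Qed.

Lemma tail (p : 'I_M -> R) (p01 : forall i, 0 <= p i <= 1) (s : R)
  (hs : s = 1 \/ s = -1) i (t : R) (t0 : 0 <= t) (t2 : t <= 2) :
  \sum_(x : {ffun 'I_M * 'I_m -> bool})
     outcome_prob (fun ij : 'I_M * 'I_m => ij.1) p x *
       (((m%:R * t < s * (Sg x i - m%:R * p i))%R)%:R)
  <= expR (- (m%:R * t ^+ 2 / 8)).
Proof.
set l := t / 4.
have l0 : 0 <= l by rewrite /l; lra.
have l1 : l <= 1/2 by rewrite /l; lra.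
have s2 : s ^+ 2 = 1 by case: hs => ->; rewrite ?expr1n ?sqrrN ?expr1n.
set a := (fun ij : 'I_M * 'I_m => ij.1).
have step1 : \sum_(x : {ffun 'I_M * 'I_m -> bool}) outcome_prob a p x *
       (((m%:R * t < s * (Sg x i - m%:R * p i))%R)%:R)
   <= \sum_(x : {ffun 'I_M * 'I_m -> bool}) outcome_prob a p x *
       expR (l * (s * (Sg x i - m%:R * p i) - m%:R * t)).
  apply: ler_sum => x _; apply: ler_wpM2l; first exact: prob_ge0.
  case: ltP => h /=.
    apply: le_trans (expR_ge1Dx _); rewrite lerDl; apply: mulr_ge0 => //; lra.
  exact: ltW (expR_gt0 _).
apply: le_trans step1 _.
set c := expR (- (l * s * m%:R * p i) - l * m%:R * t).
set G := fun (j : 'I_M * 'I_m) (b : bool) => if j.1 == i then expR (l * s * b%:R) else 1.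
have step2 : forall x : {ffun 'I_M * 'I_m -> bool},
    expR (l * (s * (Sg x i - m%:R * p i) - m%:R * t)) = c * \prod_j G j (x j).
  move=> x.
  have -> : l * (s * (Sg x i - m%:R * p i) - m%:R * t) =
     (- (l * s * m%:R * p i) - l * m%:R * t) + \sum_(k < m) l * s * (x (i, k))%:R.
    by rewrite -mulr_sumr /Sg; ring.
  rewrite expRD expR_sum; congr (_ * _).
  by rewrite (@prod_pair _ i (fun k => expR (l * s * (x (i, k))%:R))) // => -[i' k] /=; rewrite /G /=; case: eqP => // ->.
under eq_bigr do rewrite step2 mulrCA.
rewrite -mulr_sumr mgf.
set B := p i * expR (l * s) + (1 - p i).
have step3 : \prod_j (p (a j) * G j true + (1 - p (a j)) * G j false) = B ^+ m.
  rewrite (@prod_pair _ i (fun _ => B)); first by rewrite prodr_const card_ord.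
  move=> -[i' k]; rewrite /G /a /=; case: eqP => [->|_].
    by rewrite /B mulr1 mulr0 expR0 mulr1.
  by rewrite !mulr1 addrC subrK.
rewrite step3.
have [pi0 pi1] : 0 <= p i /\ p i <= 1 by have /andP[] := p01 i.
have ls : l * s <= 1/2 by case: hs => ->; lra.
have eB : expR (l * s) <= 1 + l * s + 2 * l ^+ 2.
  by have := @expR_quad R _ ls; rewrite exprMn s2 mulr1.
have B0 : 0 <= B by rewrite /B; apply: addr_ge0; [apply: mulr_ge0 => //; exact: ltW (expR_gt0 _) | lra].
have B1 : B <= expR (p i * (l * s) + 2 * p i * l ^+ 2).
  apply: le_trans (expR_ge1Dx _).
  rewrite /B; have := ler_wpM2l pi0 eB; lra.
have B2 : B ^+ m <= expR (m%:R * (p i * (l * s) + 2 * p i * l ^+ 2)).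
  rewrite expRM_natl; apply: lerXn2r => //; rewrite ?nnegrE //; exact: ltW (expR_gt0 _).
apply: le_trans (ler_wpM2l (ltW (expR_gt0 _)) B2) _.
rewrite /c -expRD ler_expR.
have ml : 0 <= m%:R * l ^+ 2 :> R by apply: mulr_ge0; [apply: ler0n | apply: sqr_ge0].
have : 2 * p i * (m%:R * l ^+ 2) <= 2 * (m%:R * l ^+ 2).
  by apply: ler_wpM2r => //; lra.
rewrite /l; move=> h; nra.
Qed.
End P1.
Arguments Sg {R M m} x i.

Section P1main.
Variable R : realType.

Lemma part1 : (exists C : R, 0 < C /\
    forall (d M m : nat) (O : 'I_M -> 'M[R[i]]_d) (rho : 'M[R[i]]_d)
           (gamma delta eps : R),
      (0 < M)%N ->
      (forall i, loewner_le 0 (O i) /\ loewner_le (O i) 1%:M) ->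
      density rho ->
      0 <= gamma -> 0 < delta <= 1 / 2 -> 0 < eps ->
      C * Num.min (gamma * M%:R) 1 <= eps ->
      C * ln (M%:R / delta) / eps ^+ 2 <= m%:R ->
      forall adv : {ffun 'I_M * 'I_m -> bool} -> {ffun 'I_M * 'I_m -> bool},
        gamma_adversary gamma adv ->
        1 - delta <=
          success_prob (fun ij : 'I_M * 'I_m => ij.1)
            (fun i => born (O i) rho) adv (@empirical_mean R M m) eps).
Proof.
exists 64; split => //.
move=> d M m O rho gamma delta eps M0 hO hrho g0 /andP[d0 d12] e0 hC hm adv hadv.
set p := (fun i => born (O i) rho).
have p01 : forall i, 0 <= p i <= 1.
  by move=> i; apply: born01 => //; [exact: (hO i).1 | exact: (hO i).2].
set a := (fun ij : 'I_M * 'I_m => ij.1).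
have emp01 : forall (y : {ffun 'I_M * 'I_m -> bool}) i, 0 <= empirical_mean R y i <= 1.
  move=> y i; rewrite /empirical_mean.
  have hc : (#|[set k | y (i, k)]| <= m)%N.
    by rewrite -[X in (_ <= X)%N]card_ord; apply: max_card.
  case: (posnP m) => [m0|mpos].
    by rewrite (_ : (m%:R : R) = 0) ?invr0 ?mulr0 ?lexx ?ler01 // m0.
  apply/andP; split; first by apply: divr_ge0; apply: ler0n.
  by rewrite ler_pdivrMr ?ltr0n // mul1r ler_nat.
have tot : \sum_x outcome_prob a p x = 1 by apply: prob_sum1.
have [e1|e1] := lerP 1 eps.
  rewrite /success_prob (eq_bigl xpredT) ?tot; first lra.
  move=> x; apply/forallP => i /=.
  have := emp01 (adv x) i; have := p01 i; rewrite ler_norml => /andP[? ?] /andP[? ?].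
  apply/andP; split; lra.
have gM : gamma * M%:R <= eps / 64.
  have : Num.min (gamma * M%:R) 1 <= eps / 64 by rewrite ler_pdivlMr //; lra.
  rewrite ge_min => /orP[//|h]; lra.
have Mr : 1 <= M%:R :> R by rewrite ler1n.
have Md : 2 <= M%:R / delta.
  by rewrite ler_pdivlMr //; lra.
set L := ln (M%:R / delta).
have L0 : 0 < L by apply: ln_gt0; lra.
have e20 : 0 < eps ^+ 2 by apply: exprn_gt0.
have key : 64 * L <= m%:R * eps ^+ 2.
  by move: hm; rewrite ler_pdivrMr.
have mpos : 0 < m%:R :> R.
  have : 0 < m%:R * eps ^+ 2 by apply: lt_le_trans key; lra.
  by rewrite pmulr_lgt0.
set q := expR (- (m%:R * (eps / 2) ^+ 2 / 8)).
have eL : expR (- L) = delta / M%:R.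
  rewrite expRN lnK ?invf_div // posrE; lra.
have q_bound : 2 * M%:R * q <= delta.
  have h1 : q <= expR (- L) * expR (- L).
    rewrite -expRD ler_expR.
    have -> : (eps / 2) ^+ 2 = eps ^+ 2 / 4 by rewrite expr_div_n; congr (_ / _); rewrite expr2 -natrM.
    lra.
  rewrite eL in h1.
  have h2 : 2 * M%:R * q <= 2 * M%:R * (delta / M%:R * (delta / M%:R)).
    by apply: ler_wpM2l => //; lra.
  apply: le_trans h2 _.
  have -> : 2 * M%:R * (delta / M%:R * (delta / M%:R)) = 2 * delta * delta / M%:R.
    by field; rewrite gt_eqF //; lra.
  rewrite ler_pdivrMr; last lra.
  nra.
set good := fun x : {ffun 'I_M * 'I_m -> bool} =>
  [forall i, `|empirical_mean R (adv x) i - p i| <= eps].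
set bad := fun (s : R) (x : {ffun 'I_M * 'I_m -> bool}) i =>
  (((m%:R * (eps / 2) < s * (Sg x i - m%:R * p i))%R)%:R : R).
have badge0 : forall s x i, 0 <= bad s x i by move=> s x i; apply: ler0n.
have cardI : #|{: 'I_M * 'I_m}|%:R = M%:R * m%:R :> R by rewrite card_prod !card_ord natrM.
have hbad : forall x, ~~ good x -> 1 <= \sum_i (bad 1 x i + bad (-1) x i).
  move=> x /forallPn [i hi].
  rewrite -ltNge !emp_S in hi.
  rewrite (bigD1 i) //=; apply: ler_wpDr.
    by apply: sumr_ge0 => j _; apply: addr_ge0.
  have hd := @S_diff R M m x (adv x) i.
  have hh := hadv x; rewrite cardI in hh.
  have hg : gamma * (M%:R * m%:R) <= eps / 64 * m%:R.
    by rewrite mulrA; apply: ler_wpM2r => //; apply: ltW.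
  have hi' : eps * m%:R < `|Sg (adv x) i - m%:R * p i|.
    have E : Sg (adv x) i / m%:R - p i = (Sg (adv x) i - m%:R * p i) / m%:R.
      by field; rewrite gt_eqF.
    by rewrite E normf_div (gtr0_norm mpos) ltr_pdivlMr in hi.
  move: hd hi'; rewrite /bad !ltr_normr !ler_norml.
  move=> /andP[hd1 hd2] /orP[hA|hA].
    have -> : (m%:R * (eps / 2) < 1 * (Sg x i - m%:R * p i))%R.
      rewrite mul1r; lra.
    by rewrite lerDl ler0n.
  have -> : (m%:R * (eps / 2) < -1 * (Sg x i - m%:R * p i))%R.
    rewrite mulN1r; lra.
  by rewrite lerDr ler0n.
have nb : \sum_(x | ~~ good x) outcome_prob a p x <= delta.
  have s1 : \sum_(x | ~~ good x) outcome_prob a p x <=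
      \sum_x outcome_prob a p x * \sum_i (bad 1 x i + bad (-1) x i).
    rewrite [X in _ <= X](bigID (fun x => ~~ good x)) /=; apply: ler_wpDr.
      apply: sumr_ge0 => x _; apply: mulr_ge0; first exact: prob_ge0.
      by apply: sumr_ge0 => j _; apply: addr_ge0.
    apply: ler_sum => x hx; rewrite -[X in X <= _]mulr1; apply: ler_wpM2l; first exact: prob_ge0.
    exact: hbad.
  apply: le_trans s1 _.
  have -> : \sum_x outcome_prob a p x * \sum_i (bad 1 x i + bad (-1) x i) =
      \sum_i (\sum_x outcome_prob a p x * bad 1 x i + \sum_x outcome_prob a p x * bad (-1) x i).
    under eq_bigr do rewrite mulr_sumr.
    rewrite exchange_big /=; apply: eq_bigr => i _.
    by rewrite -big_split /=; apply: eq_bigr => x _; rewrite mulrDr.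
  have t0 : 0 <= eps / 2 by lra.
  have t2 : eps / 2 <= 2 by lra.
  have hq : forall i, \sum_x outcome_prob a p x * bad 1 x i + \sum_x outcome_prob a p x * bad (-1) x i <= q + q.
    move=> i; apply: lerD.
      exact: (@tail R M m p p01 1 (or_introl erefl) i (eps / 2) t0 t2).
    exact: (@tail R M m p p01 (-1) (or_intror erefl) i (eps / 2) t0 t2).
  apply: le_trans (ler_sum _ (fun i _ => hq i)) _.
  rewrite sumr_const card_ord -mulr_natl; lra.
rewrite (bigID good) /= in tot.
rewrite /success_prob -/good; lra.
Qed.
End P1main.
Theorem theorem3 (R : realType) :
  (* upper bound: the grouped empirical-mean algorithm achieves
     eps = O(min{gamma M, 1}) with n = M m, m = O(log(M/delta)/eps^2) *)
  (exists C : R, 0 < C /\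
    forall (d M m : nat) (O : 'I_M -> 'M[R[i]]_d) (rho : 'M[R[i]]_d)
           (gamma delta eps : R),
      (0 < M)%N ->
      (forall i, loewner_le 0 (O i) /\ loewner_le (O i) 1%:M) ->
      density rho ->
      0 <= gamma -> 0 < delta <= 1 / 2 -> 0 < eps ->
      C * Num.min (gamma * M%:R) 1 <= eps ->
      C * ln (M%:R / delta) / eps ^+ 2 <= m%:R ->
      forall adv : {ffun 'I_M * 'I_m -> bool} -> {ffun 'I_M * 'I_m -> bool},
        gamma_adversary gamma adv ->
        1 - delta <=
          success_prob (fun ij : 'I_M * 'I_m => ij.1)
            (fun i => born (O i) rho) adv (@empirical_mean R M m) eps)
  /\
  (* optimality: for worst-case observables, every algorithm that measures each
     copy with one of the POVMs {O_i, I - O_i} must have eps = Omega(gamma M) *)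
  (exists c : R, 0 < c /\
    forall M : nat, (0 < M)%N ->
    exists (d : nat) (O : 'I_M -> 'M[R[i]]_d),
      (forall i, loewner_le 0 (O i) /\ loewner_le (O i) 1%:M) /\
      forall (n : nat) (a : 'I_n -> 'I_M)
             (est : {ffun 'I_n -> bool} -> 'I_M -> R) (gamma eps : R),
        0 <= gamma -> gamma * M%:R <= 1 ->
        (forall rho : 'M[R[i]]_d, density rho ->
           forall adv : {ffun 'I_n -> bool} -> {ffun 'I_n -> bool},
             gamma_adversary gamma adv ->
             2 / 3 <= success_prob a (fun i => born (O i) rho) adv est eps) ->
        c * (gamma * M%:R) <= eps).
Proof.
split; [exact: (part1 R) | exact: (part2 R)].
Qed.
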